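(* For every $N\ge1$ and all complex numbers $z_1,\dots,z_N$, $$\prod_{i=1}^N\|x-z_i\|\le\sqrt{\frac{e^N}{N+1}}\,\Big\|\prod_{i=1}^N(x-z_i)\Big\|,$$ where $\|\cdot\|$ is the Bombieri–Weyl norm.
   Context: The Bombieri–Weyl norm of a univariate polynomial $P(z)=\sum_{i=0}^N a_iz^i$ of degree $N$ is $\|P\|=\big(\sum_{i=0}^N\binom{N}{i}^{-1}|a_i|^2\big)^{1/2}$ (so in particular $\|x-z\|=\sqrt{1+|z|^2}$). *)

(* Defs.v *)
From Stdlib Require Import Reals List.
Import ListNotations.
Open Scope R_scope.

(* Complex numbers as (real part, imaginary part). *)
Definition Cx : Type := (R * R)%type.
Definition Cx0 : Cx := (0, 0).
Definition Cx1 : Cx := (1, 0).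
Definition Cxsub (a b : Cx) : Cx := (fst a - fst b, snd a - snd b).
Definition Cxopp (a : Cx) : Cx := (- fst a, - snd a).
Definition Cxmul (a b : Cx) : Cx :=
  (fst a * fst b - snd a * snd b, fst a * snd b + snd a * fst b).
Definition Cxnorm2 (a : Cx) : R := fst a * fst a + snd a * snd a.

(* A univariate polynomial is its list of coefficients [a_0; a_1; ...; a_N]
   (lowest degree first); its (formal) degree is length - 1. *)

(* multiplication of a coefficient list by (x - z):
   b_0 = -z a_0, b_i = a_(i-1) - z a_i, b_(N+1) = a_N. *)
Fixpoint lin_mul_aux (z prev : Cx) (p : list Cx) : list Cx :=
  match p with
  | nil => [prev]
  | a :: p' => Cxsub prev (Cxmul z a) :: lin_mul_aux z a p'
  end.
Definition lin_mul (z : Cx) (p : list Cx) : list Cx := lin_mul_aux z Cx0 p.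

Definition lin_factor (z : Cx) : list Cx := [Cxopp z; Cx1].

Definition prod_lin (zs : list Cx) : list Cx :=
  fold_right lin_mul [Cx1] zs.

Definition bw_norm (p : list Cx) : R :=
  let N := (length p - 1)%nat in
  sqrt (sum_f_R0 (fun i => Cxnorm2 (nth i p Cx0) / Binomial.C N i) N).

Definition prod_bw_factors (zs : list Cx) : R :=
  fold_right Rmult 1 (map (fun z => bw_norm (lin_factor z)) zs).

(* Main.v *)
Require Import Defs.
From Stdlib Require Import Reals List Lra Lia.
From Coquelicot Require Import Coquelicot.
Import ListNotations.
Open Scope R_scope.

Lemma RInt_plus' (f g : R -> R) a b If Ig :
  is_RInt f a b If -> is_RInt g a b Ig -> is_RInt (fun t => f t + g t) a b (If + Ig).
Proof. intros. apply (is_RInt_plus f g a b If Ig); auto. Qed.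

Lemma RInt_minus' (f g : R -> R) a b If Ig :
  is_RInt f a b If -> is_RInt g a b Ig -> is_RInt (fun t => f t - g t) a b (If - Ig).
Proof. intros. apply (is_RInt_minus f g a b If Ig); auto. Qed.

Lemma RInt_scal' (f : R -> R) a b k If :
  is_RInt f a b If -> is_RInt (fun t => k * f t) a b (k * If).
Proof. intros. apply (is_RInt_scal f a b k If); auto. Qed.

Lemma RInt_const' a b (c : R) : is_RInt (fun _ => c) a b ((b - a) * c).
Proof. apply (is_RInt_const a b c). Qed.

Lemma RInt_Chasles' (f : R -> R) a b c l1 l2 :
  is_RInt f a b l1 -> is_RInt f b c l2 -> is_RInt f a c (l1 + l2).
Proof. intros. apply (is_RInt_Chasles f a b c l1 l2); auto. Qed.

Lemma RInt_val (f : R -> R) a b l l' : l = l' -> is_RInt f a b l -> is_RInt f a b l'.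
Proof. intros ->; auto. Qed.

Lemma RInt_deriv (f df : R -> R) a b :
  (forall x, Rmin a b <= x <= Rmax a b -> is_derive f x (df x)) ->
  (forall x, Rmin a b <= x <= Rmax a b -> continuous df x) ->
  is_RInt df a b (f b - f a).
Proof. intros. apply (is_RInt_derive f df a b); auto. Qed.

Lemma RInt_sum (F : nat -> R -> R) (I : nat -> R) a b n :
  (forall k, (k <= n)%nat -> is_RInt (F k) a b (I k)) ->
  is_RInt (fun t => sum_f_R0 (fun k => F k t) n) a b (sum_f_R0 I n).
Proof.
  induction n; intros H; simpl.
  - apply H; lia.
  - apply RInt_plus'. apply IHn; intros; apply H; lia. apply H; lia.
Qed.

Lemma beta (a b : nat) :
  is_RInt (fun t => t ^ a * (1 - t) ^ b) 0 1
    (INR (Factorial.fact a) * INR (Factorial.fact b) / INR (Factorial.fact (a + b + 1))).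
Proof.
  revert b; induction a; intros b.
  - eapply RInt_val; [| eapply is_RInt_ext;
      [| apply (RInt_deriv (fun t => - (1-t)^(S b) / INR (S b)) (fun t => (1-t)^b))]].
    + simpl. replace (b + 1)%nat with (S b) by lia. rewrite fact_simpl, mult_INR.
      assert (INR (Factorial.fact b) <> 0) by apply INR_fact_neq_0.
      assert (INR (S b) <> 0) by (apply not_0_INR; lia).
      change (match b with 0%nat => 1 | S _ => INR b + 1 end) with (INR (S b)).
      replace (1 - 1) with 0 by ring. replace (1 - 0) with 1 by ring. rewrite pow1. field; auto.
    + intros x _; simpl; ring.
    + intros x _. auto_derive; auto.
      change (match b with 0%nat => 1 | S _ => INR b + 1 end) with (INR (S b)).
      replace (1 + - x) with (1 - x) by ring.
      assert (INR (S b) <> 0) by (apply not_0_INR; lia). field; auto.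
    + intros y _. apply (ex_derive_continuous (K:=R_AbsRing) (V:=R_NormedModule)). auto_derive; auto.
  -
    set (df := fun t : R => INR (S a) * (t ^ a * (1 - t) ^ S b) - INR (S b) * (t ^ S a * (1 - t) ^ b)).
    assert (HD : is_RInt df 0 1 (1 ^ S a * (1 - 1) ^ S b - 0 ^ S a * (1 - 0) ^ S b)).
    { apply (RInt_deriv (fun t => t ^ S a * (1 - t) ^ S b)).
      - intros x _. unfold df. auto_derive; auto.
        change (match a with 0%nat => 1 | S _ => INR a + 1 end) with (INR (S a)).
        change (match b with 0%nat => 1 | S _ => INR b + 1 end) with (INR (S b)).
        replace (1 + - x) with (1 - x) by ring. simpl. ring.
      - intros y _. apply (ex_derive_continuous (K:=R_AbsRing) (V:=R_NormedModule)). unfold df. auto_derive; auto. }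
    simpl in HD. replace ((1 * 1 ^ a * ((1 - 1) * (1 - 1) ^ b) - 0 * 0 ^ a * ((1 - 0) * (1 - 0) ^ b))) with 0 in HD by ring.
    assert (H2 := RInt_scal' _ 0 1 (INR (S a)) _ (IHa (S b))).
    assert (H3 := RInt_minus' _ _ 0 1 _ _ H2 HD).
    assert (H4 := RInt_scal' _ 0 1 (/ INR (S b)) _ H3).
    assert (INR (S b) <> 0) by (apply not_0_INR; lia).
    eapply RInt_val; [| eapply is_RInt_ext; [| exact H4]].
    + replace (a + S b + 1)%nat with (S a + b + 1)%nat by lia.
      rewrite (fact_simpl a), (fact_simpl b), !mult_INR.
      assert (INR (Factorial.fact b) <> 0) by apply INR_fact_neq_0.
      assert (INR (Factorial.fact (S a + b + 1)) <> 0) by apply INR_fact_neq_0.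
      match goal with |- ?x = ?y => change (@eq R x y) end. field; auto.
    + intros x _. unfold df. simpl. field; auto.
Qed.
Lemma RInt_ext' (f g : R -> R) a b (l : R) :
  (forall x, Rmin a b < x < Rmax a b -> f x = g x) -> is_RInt f a b l -> is_RInt g a b l.
Proof. intros. apply (is_RInt_ext f g a b l); auto. Qed.
Ltac reqR := match goal with |- ?x = ?y => change (@eq R x y) end.

Definition Fm (s t : R) : R := Rmax t (s * (1 - t)).

Lemma int_ln1m (u : R) : 0 <= u < 1 ->
  is_RInt (fun t => ln (1 - t)) 0 u (- (1 - u) * ln (1 - u) - u).
Proof.
  intros Hu.
  eapply RInt_val; [| apply (RInt_deriv (fun t => - (1 - t) * ln (1 - t) - t))].
  - reqR. replace (1 - 0) with 1 by ring. rewrite ln_1. ring.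
  - intros x Hx. rewrite Rmin_left in Hx by lra. rewrite Rmax_right in Hx by lra.
    auto_derive. lra. replace (1 + - x) with (1 - x) by ring. field. lra.
  - intros x Hx. rewrite Rmin_left in Hx by lra. rewrite Rmax_right in Hx by lra.
    apply (ex_derive_continuous (K:=R_AbsRing) (V:=R_NormedModule)). auto_derive. lra.
Qed.

Lemma int_ln (u : R) : 0 < u <= 1 ->
  is_RInt (fun t => ln t) u 1 (- 1 - (u * ln u - u)).
Proof.
  intros Hu.
  eapply RInt_val; [| apply (RInt_deriv (fun t => t * ln t - t))].
  - reqR. rewrite ln_1. ring.
  - intros x Hx. rewrite Rmin_left in Hx by lra. rewrite Rmax_right in Hx by lra.
    auto_derive. lra. field. lra.
  - intros x Hx. rewrite Rmin_left in Hx by lra. rewrite Rmax_right in Hx by lra.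
    apply (ex_derive_continuous (K:=R_AbsRing) (V:=R_NormedModule)). auto_derive. lra.
Qed.

Lemma int_lnFm (s : R) : 0 < s ->
  is_RInt (fun t => ln (Fm s t)) 0 1 (ln (1 + s) - 1).
Proof.
  intros Hs. set (t0 := s / (1 + s)).
  assert (Ht0 : 0 < t0 < 1).
  { unfold t0; split. apply Rdiv_lt_0_compat; lra.
    apply Rmult_lt_reg_r with (1 + s). lra. field_simplify; lra. }
  assert (E1 : is_RInt (fun t => ln (Fm s t)) 0 t0 (t0 * ln s + (- (1 - t0) * ln (1 - t0) - t0))).
  { eapply RInt_val; [| eapply RInt_ext'; [| apply RInt_plus'; [apply (RInt_const' 0 t0 (ln s)) | apply int_ln1m; lra]]].
    - reqR. ring.
    - intros x Hx. rewrite Rmin_left in Hx by lra. rewrite Rmax_right in Hx by lra.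
      unfold Fm. rewrite Rmax_right. rewrite ln_mult by lra. ring.
      assert (x * (1 + s) < s).
      { apply Rlt_le_trans with (t0 * (1 + s)). apply Rmult_lt_compat_r; lra.
        unfold t0; right; field; lra. }
      nra. }
  assert (E2 : is_RInt (fun t => ln (Fm s t)) t0 1 (- 1 - (t0 * ln t0 - t0))).
  { eapply RInt_ext'; [| apply int_ln; lra].
    intros x Hx. rewrite Rmin_left in Hx by lra. rewrite Rmax_right in Hx by lra.
    unfold Fm. rewrite Rmax_left. reflexivity.
    assert (t0 * (1 + s) < x * (1 + s)) by (apply Rmult_lt_compat_r; lra).
    assert (t0 * (1 + s) = s) by (unfold t0; field; lra). nra. }
  eapply RInt_val; [| apply (RInt_Chasles' _ _ _ _ _ _ E1 E2)].
  assert (Hl1 : ln t0 = ln s - ln (1 + s)).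
  { unfold t0. unfold Rdiv. rewrite ln_mult, ln_Rinv by (try apply Rinv_0_lt_compat; lra). ring. }
  assert (Hl2 : ln (1 - t0) = - ln (1 + s)).
  { replace (1 - t0) with (/ (1 + s)) by (unfold t0; field; lra). rewrite ln_Rinv by lra. ring. }
  reqR. rewrite Hl1, Hl2. unfold t0. field. lra.
Qed.

Definition prodm (ss : list R) (t : R) : R := fold_right (fun s acc => Fm s t * acc) 1 ss.
Definition Kc (ss : list R) : R := fold_right (fun s acc => (1 + s) * exp (-1) * acc) 1 ss.
Definition hsum (ss : list R) (t : R) : R :=
  fold_right (fun s acc => ln (Fm s t) - ln (1 + s) + 1 + acc) 0 ss.
Definition Bnd (ss : list R) : R := fold_right (fun s acc => (1 + s) * acc) 1 ss.
Fixpoint Ee (ss : list R) : R :=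
  match ss with nil => 0 | s :: ss' => Bnd ss' + (2 + s) * Ee ss' end.

Lemma Fm_ge_t s t : t <= Fm s t.
Proof. unfold Fm; apply Rmax_l. Qed.

Lemma Fm_bounds s t : 0 <= s -> 0 <= t <= 1 -> 0 <= Fm s t <= 1 + s.
Proof.
  intros Hs Ht. split. apply Rle_trans with t. lra. apply Fm_ge_t.
  unfold Fm; apply Rmax_lub; nra.
Qed.

Lemma Fm_pert s t e : 0 <= s -> 0 <= t <= 1 -> 0 <= e -> Fm (s + e) t <= Fm s t + e.
Proof.
  intros. unfold Fm. apply Rmax_lub.
  - apply Rle_trans with (Rmax t (s * (1 - t))). apply Rmax_l. lra.
  - apply Rle_trans with (s * (1 - t) + e). nra.
    apply Rplus_le_compat_r. apply Rmax_r.
Qed.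

Lemma exp_m1_1 : exp (-1) * exp 1 = 1.
Proof. rewrite <- exp_plus. replace (-1 + 1) with 0 by ring. apply exp_0. Qed.

Lemma Kc_ge0 ss : (forall s, In s ss -> 0 <= s) -> 0 <= Kc ss.
Proof.
  induction ss as [|s ss IH]; intros H; simpl. lra.
  assert (0 <= s) by (apply H; left; auto).
  assert (0 <= Kc ss) by (apply IH; intros; apply H; right; auto).
  assert (0 < exp (-1)) by apply exp_pos.
  apply Rmult_le_pos; auto. apply Rmult_le_pos; lra.
Qed.

Lemma prodm_exp ss t : (forall s, In s ss -> 0 <= s) -> 0 < t ->
  prodm ss t = Kc ss * exp (hsum ss t).
Proof.
  induction ss as [|s ss IH]; intros H Ht; simpl.
  - rewrite exp_0; ring.
  - assert (0 <= s) by (apply H; left; auto).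
    fold (prodm ss t) (Kc ss) (hsum ss t).
    rewrite IH; [| intros; apply H; right; auto | auto].
    assert (HF : 0 < Fm s t) by (apply Rlt_le_trans with t; auto; apply Fm_ge_t).
    unfold Rminus. rewrite !exp_plus, exp_Ropp, !exp_ln by lra.
    replace (Fm s t * (Kc ss * exp (hsum ss t)))
      with (Fm s t * (Kc ss * exp (hsum ss t)) * (exp (-1) * exp 1)) by (rewrite exp_m1_1; ring).
    field. lra.
Qed.

Lemma hsum_int ss : (forall s, In s ss -> 0 < s) -> is_RInt (hsum ss) 0 1 0.
Proof.
  induction ss as [|s ss IH]; intros H.
  - eapply RInt_val; [| apply (RInt_const' 0 1 0)]. reqR; ring.
  - assert (0 < s) by (apply H; left; auto).
    assert (IH' := IH (fun x Hx => H x (or_intror Hx))).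
    assert (A := RInt_minus' _ _ 0 1 _ _ (int_lnFm s H0) (RInt_const' 0 1 (ln (1 + s) - 1))).
    assert (B := RInt_plus' _ _ 0 1 _ _ A IH').
    eapply RInt_val; [| eapply RInt_ext'; [| exact B]].
    + reqR; ring.
    + intros x _. simpl. ring.
Qed.

Lemma key_pos ss (W : R -> R) I : (forall s, In s ss -> 0 < s) ->
  is_RInt W 0 1 I -> (forall t, 0 < t < 1 -> prodm ss t <= W t) -> Kc ss <= I.
Proof.
  intros Hs HW Hp.
  assert (Hs' : forall s, In s ss -> 0 <= s) by (intros; apply Rlt_le; auto).
  assert (A := RInt_scal' _ 0 1 (Kc ss) _ (RInt_plus' _ _ 0 1 _ _ (RInt_const' 0 1 1) (hsum_int ss Hs))).
  replace (Kc ss) with (Kc ss * ((1 - 0) * 1 + 0)) by ring.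
  apply (is_RInt_le _ _ 0 1 _ _ (Rle_0_1) A HW).
  intros t Ht. apply Rle_trans with (prodm ss t); [| apply Hp; auto].
  rewrite prodm_exp by (auto; lra).
  apply Rmult_le_compat_l. apply Kc_ge0; auto.
  apply exp_ineq1_le.
Qed.

Lemma Bnd_ge0 ss : (forall s, In s ss -> 0 <= s) -> 0 <= Bnd ss.
Proof.
  induction ss as [|s ss IH]; intros H; simpl. lra.
  assert (0 <= s) by (apply H; left; auto).
  assert (0 <= Bnd ss) by (apply IH; intros; apply H; right; auto). nra.
Qed.

Lemma Ee_ge0 ss : (forall s, In s ss -> 0 <= s) -> 0 <= Ee ss.
Proof.
  induction ss as [|s ss IH]; intros H; simpl. lra.
  assert (0 <= s) by (apply H; left; auto).
  assert (0 <= Ee ss) by (apply IH; intros; apply H; right; auto).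
  assert (0 <= Bnd ss) by (apply Bnd_ge0; intros; apply H; right; auto). nra.
Qed.

Lemma prodm_bounds ss t : (forall s, In s ss -> 0 <= s) -> 0 <= t <= 1 ->
  0 <= prodm ss t <= Bnd ss.
Proof.
  induction ss as [|s ss IH]; intros H Ht; simpl. lra.
  assert (0 <= s) by (apply H; left; auto).
  assert (0 <= prodm ss t <= Bnd ss) by (apply IH; auto; intros; apply H; right; auto).
  fold (prodm ss t). assert (F := Fm_bounds s t H0 Ht). split. nra.
  apply Rmult_le_compat; lra.
Qed.

Lemma prodm_pert ss t e : (forall s, In s ss -> 0 <= s) -> 0 <= t <= 1 -> 0 <= e <= 1 ->
  prodm (map (fun s => s + e) ss) t <= prodm ss t + e * Ee ss.
Proof.
  induction ss as [|s ss IH]; intros H Ht He; simpl. lra.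
  assert (0 <= s) by (apply H; left; auto).
  assert (H' : forall x, In x ss -> 0 <= x) by (intros; apply H; right; auto).
  assert (IH' := IH H' Ht He).
  fold (prodm ss t). fold (prodm (map (fun s0 => s0 + e) ss) t) in *.
  assert (B1 := prodm_bounds ss t H' Ht).
  assert (H'' : forall x, In x (map (fun s0 => s0 + e) ss) -> 0 <= x).
  { intros x Hx. apply in_map_iff in Hx. destruct Hx as [y [<- Hy]]. apply H' in Hy. lra. }
  assert (B2 := prodm_bounds _ t H'' Ht).
  assert (F1 := Fm_bounds s t H0 Ht). assert (F2 := Fm_pert s t e H0 Ht (proj1 He)).
  assert (F3 := Fm_bounds (s + e) t ltac:(lra) Ht).
  assert (E0 := Ee_ge0 ss H').
  set (A := Fm s t) in *. set (A' := Fm (s + e) t) in *.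
  set (P := prodm ss t) in *. set (P' := prodm (map (fun s0 => s0 + e) ss) t) in *.
  apply Rle_trans with ((A + e) * (P + e * Ee ss)).
  apply Rmult_le_compat; lra.
  assert (e * (A * Ee ss) <= e * ((1 + s) * Ee ss)) by (apply Rmult_le_compat_l; [lra | apply Rmult_le_compat_r; lra]).
  assert (e * (e * Ee ss) <= e * (1 * Ee ss)) by (apply Rmult_le_compat_l; [lra | apply Rmult_le_compat_r; lra]).
  assert (e * P <= e * Bnd ss) by (apply Rmult_le_compat_l; lra).
  simpl. lra.
Qed.

Lemma Kc_mono ss e : (forall s, In s ss -> 0 <= s) -> 0 <= e ->
  Kc ss <= Kc (map (fun s => s + e) ss).
Proof.
  induction ss as [|s ss IH]; intros H He; simpl. lra.
  assert (0 <= s) by (apply H; left; auto).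
  assert (H' : forall x, In x ss -> 0 <= x) by (intros; apply H; right; auto).
  assert (0 < exp (-1)) by apply exp_pos.
  assert (0 <= Kc ss) by (apply Kc_ge0; auto).
  fold (Kc ss) (Kc (map (fun s0 => s0 + e) ss)).
  apply Rmult_le_compat; auto. apply Rmult_le_pos; lra.
  apply Rmult_le_compat_r; lra.
Qed.

Lemma lim_le a b c : 0 <= c -> (forall e, 0 < e <= 1 -> a <= b + e * c) -> a <= b.
Proof.
  intros Hc H. destruct (Rle_dec a b) as [|Hn]; auto.
  exfalso. apply Rnot_le_lt in Hn.
  set (e := Rmin 1 ((a - b) / (c + 1))).
  assert (He1 : e <= 1) by apply Rmin_l.
  assert (He2 : e <= (a - b) / (c + 1)) by apply Rmin_r.
  assert (He0 : 0 < e). { unfold e. apply Rmin_glb_lt. lra. apply Rdiv_lt_0_compat; lra. }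
  assert (e * (c + 1) <= a - b).
  { apply Rmult_le_reg_r with (/ (c + 1)). apply Rinv_0_lt_compat; lra.
    rewrite Rmult_assoc, Rinv_r, Rmult_1_r by lra. exact He2. }
  specialize (H e (conj He0 He1)). nra.
Qed.

Lemma key_gen ss (W : R -> R) I : (forall s, In s ss -> 0 <= s) ->
  is_RInt W 0 1 I -> (forall t, 0 <= t <= 1 -> prodm ss t <= W t) -> Kc ss <= I.
Proof.
  intros Hs HW Hp. apply (lim_le _ _ (Ee ss)). apply Ee_ge0; auto.
  intros e He.
  apply Rle_trans with (Kc (map (fun s => s + e) ss)). apply Kc_mono; auto; lra.
  apply (key_pos _ (fun t => W t + e * Ee ss)).
  - intros x Hx. apply in_map_iff in Hx. destruct Hx as [y [<- Hy]]. apply Hs in Hy. lra.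
  - eapply RInt_val; [| apply (RInt_plus' _ _ 0 1 _ _ HW (RInt_const' 0 1 (e * Ee ss)))].
    reqR; ring.
  - intros t Ht. apply Rle_trans with (prodm ss t + e * Ee ss).
    apply prodm_pert; auto; lra. apply Rplus_le_compat_r. apply Hp; lra.
Qed.

Definition cj (a : Cx) : Cx := (fst a, - snd a).
Definition rs (c : R) (a : Cx) : Cx := (c * fst a, c * snd a).

Fixpoint gl_aux (a b prev : Cx) (p : list Cx) : list Cx :=
  match p with
  | nil => [Cxmul a prev]
  | c :: p' => Cxsub (Cxmul a prev) (Cxmul b c) :: gl_aux a b c p'
  end.
Definition gl (a b : Cx) (p : list Cx) : list Cx := gl_aux a b Cx0 p.

Definition norm2 (l : list Cx) : R := fold_right (fun c acc => Cxnorm2 c + acc) 0 l.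

Ltac cxd := repeat match goal with
  | x : Cx |- _ => let x1 := fresh x in let x2 := fresh x in destruct x as [x1 x2]
  end; unfold Cxsub, Cxmul, Cxnorm2, Cx0, Cx1, cj, rs in *; simpl in *.
Ltac cxring := cxd; try (f_equal; ring); try ring.

Lemma gl_aux_len a b prev p : length (gl_aux a b prev p) = S (length p).
Proof. revert prev; induction p; intros; simpl; auto. Qed.

Lemma gl_aux_nth a b prev p k :
  nth k (gl_aux a b prev p) Cx0 = Cxsub (Cxmul a (nth k (prev :: p) Cx0)) (Cxmul b (nth k p Cx0)).
Proof.
  revert prev k; induction p as [|c p IH]; intros prev k.
  - destruct k as [|[|k]]; simpl; cxring.
  - destruct k as [|k]; simpl. reflexivity. rewrite IH. reflexivity.
Qed.

Lemma lin_aux_len z prev p : length (lin_mul_aux z prev p) = S (length p).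
Proof. revert prev; induction p; intros; simpl; auto. Qed.

Lemma lin_aux_nth z prev p k :
  nth k (lin_mul_aux z prev p) Cx0 = Cxsub (nth k (prev :: p) Cx0) (Cxmul z (nth k p Cx0)).
Proof.
  revert prev k; induction p as [|c p IH]; intros prev k.
  - destruct k as [|[|k]]; simpl; cxring.
  - destruct k as [|k]; simpl. reflexivity. rewrite IH. reflexivity.
Qed.

Lemma nth_cons0_gl c d p k :
  nth k (Cx0 :: gl c d p) Cx0 =
  Cxsub (Cxmul c (nth k (Cx0 :: Cx0 :: p) Cx0)) (Cxmul d (nth k (Cx0 :: p) Cx0)).
Proof.
  destruct k as [|k]. simpl; cxring. simpl. unfold gl. rewrite gl_aux_nth. reflexivity.
Qed.

Lemma gl_comm a b c d p : gl a b (gl c d p) = gl c d (gl a b p).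
Proof.
  apply nth_ext with Cx0 Cx0.
  - unfold gl; rewrite !gl_aux_len; reflexivity.
  - intros k _. unfold gl at 1 3. rewrite !gl_aux_nth.
    fold (gl c d p) (gl a b p). rewrite !nth_cons0_gl.
    unfold gl; rewrite !gl_aux_nth.
    destruct k as [|k]; simpl; cxring.
Qed.

Lemma gl_swap_aux a b prev p :
  norm2 (gl_aux a b prev p) = norm2 (gl_aux (cj b) (cj a) prev p)
     + (Cxnorm2 a - Cxnorm2 b) * Cxnorm2 prev.
Proof.
  revert prev; induction p as [|c p IH]; intros prev; simpl.
  - cxring.
  - rewrite IH. cxring.
Qed.

Lemma gl_swap a b p : norm2 (gl a b p) = norm2 (gl (cj b) (cj a) p).
Proof. unfold gl. rewrite gl_swap_aux. cxring. Qed.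

Definition G (fs : list (Cx * Cx)) (q : list Cx) : list Cx :=
  fold_right (fun f acc => gl (fst f) (snd f) acc) q fs.

Lemma G_comm fs a b q : G fs (gl a b q) = gl a b (G fs q).
Proof.
  induction fs as [|f fs IH]; simpl. reflexivity.
  rewrite IH. apply gl_comm.
Qed.

Definition prodM (fs : list (Cx * Cx)) : R :=
  fold_right (fun f acc => Rmax (Cxnorm2 (fst f)) (Cxnorm2 (snd f)) * acc) 1 fs.

Lemma Cxnorm2_ge0 a : 0 <= Cxnorm2 a.
Proof. cxd. nra. Qed.

Lemma prodM_ge0 fs : 0 <= prodM fs.
Proof.
  induction fs; simpl. lra. apply Rmult_le_pos; auto.
  apply Rle_trans with (Cxnorm2 (fst a)). apply Cxnorm2_ge0. apply Rmax_l.
Qed.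

Lemma norm2_ge0 l : 0 <= norm2 l.
Proof. induction l; simpl. lra. assert (H := Cxnorm2_ge0 a). lra. Qed.

Lemma landau fs q : prodM fs * Cxnorm2 (nth 0 q Cx0) <= norm2 (G fs q).
Proof.
  revert q; induction fs as [|[a b] fs IH]; intros q.
  - simpl. destruct q as [|c q]; simpl. unfold Cxnorm2, Cx0; simpl; lra.
    assert (H := norm2_ge0 q). lra.
  - change (G ((a, b) :: fs) q) with (gl a b (G fs q)).
    change (prodM ((a, b) :: fs)) with (Rmax (Cxnorm2 a) (Cxnorm2 b) * prodM fs).
    assert (P0 := prodM_ge0 fs).
    destruct (Rle_dec (Cxnorm2 a) (Cxnorm2 b)) as [Hab|Hab].
    + rewrite Rmax_right by auto. rewrite <- G_comm.
      eapply Rle_trans; [| apply IH].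
      unfold gl. rewrite gl_aux_nth. simpl.
      replace (Cxnorm2 (Cxsub (Cxmul a Cx0) (Cxmul b (nth 0 q Cx0))))
        with (Cxnorm2 b * Cxnorm2 (nth 0 q Cx0)) by cxring. lra.
    + rewrite Rmax_left by lra. rewrite gl_swap, <- G_comm.
      eapply Rle_trans; [| apply IH].
      unfold gl. rewrite gl_aux_nth. simpl.
      replace (Cxnorm2 (Cxsub (Cxmul (cj b) Cx0) (Cxmul (cj a) (nth 0 q Cx0))))
        with (Cxnorm2 a * Cxnorm2 (nth 0 q Cx0)) by cxring. lra.
Qed.

Lemma prod_lin_len zs : length (prod_lin zs) = S (length zs).
Proof.
  induction zs as [|z zs IH]; simpl. reflexivity.
  unfold lin_mul. rewrite lin_aux_len, IH. reflexivity.
Qed.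

Definition mkfs (u v : R) (zs : list Cx) : list (Cx * Cx) :=
  map (fun z => ((u, 0), (v * fst z, v * snd z))) zs.

Lemma scale_lemma u v zs k :
  nth k (G (mkfs u v zs) [Cx1]) Cx0 = rs (u ^ k * v ^ (length zs - k)) (nth k (prod_lin zs) Cx0).
Proof.
  revert k; induction zs as [|z zs IH]; intros k.
  - destruct k as [|k]; simpl. cxring. destruct k; simpl; cxring.
  - change (G (mkfs u v (z :: zs)) [Cx1]) with (gl (u, 0) (v * fst z, v * snd z) (G (mkfs u v zs) [Cx1])).
    change (prod_lin (z :: zs)) with (lin_mul z (prod_lin zs)).
    unfold gl, lin_mul. rewrite gl_aux_nth, lin_aux_nth.
    assert (HL := prod_lin_len zs).
    simpl length. remember (length zs) as n.
    destruct k as [|k].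
    + simpl nth. rewrite IH. simpl. replace (n - 0)%nat with n by lia. cxring.
    + simpl nth. rewrite !IH. simpl pow.
      destruct (Compare_dec.le_lt_dec (S k) n) as [Hk|Hk].
      * replace (n - k)%nat with (S (n - S k)) by lia. simpl pow. cxring.
      * rewrite (nth_overflow (prod_lin zs) (n:=S k)) by lia. cxring.
Qed.

Lemma norm2_sum l n : (length l <= S n)%nat ->
  norm2 l = sum_f_R0 (fun k => Cxnorm2 (nth k l Cx0)) n.
Proof.
  revert n; induction l as [|c l IH]; intros n Hn.
  - simpl. induction n; simpl. unfold Cxnorm2, Cx0; simpl; ring.
    rewrite <- IHn by (simpl; lia). unfold Cxnorm2, Cx0; simpl; ring.
  - simpl. destruct n as [|n].
    + simpl in Hn. destruct l; simpl in *; [ring | lia].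
    + rewrite decomp_sum by lia. simpl. rewrite (IH n) by (simpl in Hn; lia). reflexivity.
Qed.

Lemma Cxnorm2_rs c a : Cxnorm2 (rs c a) = c ^ 2 * Cxnorm2 a.
Proof. cxring. Qed.

Lemma G_len fs q : length (G fs q) = (length fs + length q)%nat.
Proof.
  induction fs; simpl. reflexivity. unfold gl. rewrite gl_aux_len, IHfs. reflexivity.
Qed.

Lemma pow_sq x k : x ^ k * x ^ k = (x * x) ^ k.
Proof. rewrite Rpow_mult_distr. reflexivity. Qed.

Definition Wf (a : list Cx) (N : nat) (t : R) : R :=
  sum_f_R0 (fun k => Cxnorm2 (nth k a Cx0) * (t ^ k * (1 - t) ^ (N - k))) N.

Lemma prodM_mkfs t zs : 0 <= t <= 1 ->
  prodM (mkfs (sqrt t) (sqrt (1 - t)) zs) = prodm (map Cxnorm2 zs) t.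
Proof.
  intros Ht. induction zs as [|z zs IH]; simpl. reflexivity.
  fold (prodm (map Cxnorm2 zs) t). rewrite <- IH. f_equal.
  unfold Fm. f_equal.
  - unfold Cxnorm2; simpl. rewrite sqrt_sqrt by lra. ring.
  - unfold Cxnorm2; simpl.
    replace (sqrt (1 - t) * fst z * (sqrt (1 - t) * fst z) + sqrt (1 - t) * snd z * (sqrt (1 - t) * snd z))
      with ((sqrt (1 - t) * sqrt (1 - t)) * (fst z * fst z + snd z * snd z)) by ring.
    rewrite sqrt_sqrt by lra. ring.
Qed.

Lemma pointwise zs t : 0 <= t <= 1 ->
  prodm (map Cxnorm2 zs) t <= Wf (prod_lin zs) (length zs) t.
Proof.
  intros Ht.
  assert (L := landau (mkfs (sqrt t) (sqrt (1 - t)) zs) [Cx1]).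
  rewrite prodM_mkfs in L by auto.
  replace (Cxnorm2 (nth 0 [Cx1] Cx0)) with 1 in L by (unfold Cxnorm2; simpl; ring).
  rewrite Rmult_1_r in L. eapply Rle_trans; [exact L|].
  rewrite (norm2_sum _ (length zs)).
  2:{ rewrite G_len. unfold mkfs. rewrite length_map. simpl. rewrite Nat.add_comm. apply le_n. }
  unfold Wf. right. apply sum_eq. intros k Hk.
  rewrite scale_lemma, Cxnorm2_rs.
  replace ((sqrt t ^ k * sqrt (1 - t) ^ (length zs - k)) ^ 2)
    with ((sqrt t ^ k * sqrt t ^ k) * (sqrt (1 - t) ^ (length zs - k) * sqrt (1 - t) ^ (length zs - k))) by ring.
  rewrite !pow_sq, !sqrt_sqrt by lra. ring.
Qed.

Lemma Wf_int a N :
  is_RInt (Wf a N) 0 1 (sum_f_R0 (fun k => Cxnorm2 (nth k a Cx0) / Binomial.C N k) N / INR (S N)).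
Proof.
  eapply RInt_val; [| apply (RInt_sum (fun k t => Cxnorm2 (nth k a Cx0) * (t ^ k * (1 - t) ^ (N - k)))
     (fun k => Cxnorm2 (nth k a Cx0) * (INR (Factorial.fact k) * INR (Factorial.fact (N - k)) / INR (Factorial.fact (k + (N - k) + 1)))))].
  - reqR. unfold Rdiv at 2. rewrite Rmult_comm, scal_sum. apply sum_eq. intros k Hk.
    replace (k + (N - k) + 1)%nat with (S N) by lia.
    rewrite fact_simpl, mult_INR. unfold Binomial.C.
    assert (INR (Factorial.fact k) <> 0) by apply INR_fact_neq_0.
    assert (INR (Factorial.fact (N - k)) <> 0) by apply INR_fact_neq_0.
    assert (INR (Factorial.fact N) <> 0) by apply INR_fact_neq_0.
    assert (INR (S N) <> 0) by (apply not_0_INR; lia).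
    field. auto.
  - intros k _. apply RInt_scal'. apply beta.
Qed.

Lemma bw_lin z : bw_norm (lin_factor z) = sqrt (1 + Cxnorm2 z).
Proof.
  unfold bw_norm, lin_factor. simpl. unfold Binomial.C. simpl.
  f_equal. unfold Cxnorm2, Cxopp, Cx1; simpl. field.
Qed.

Lemma prod_bw zs : prod_bw_factors zs = sqrt (Bnd (map Cxnorm2 zs)).
Proof.
  induction zs as [|z zs IH]; unfold prod_bw_factors in *; simpl.
  - rewrite sqrt_1. reflexivity.
  - rewrite IH, bw_lin. fold (Bnd (map Cxnorm2 zs)). rewrite sqrt_mult. reflexivity.
    assert (H := Cxnorm2_ge0 z). lra.
    apply Bnd_ge0. intros s Hs. apply in_map_iff in Hs. destruct Hs as [y [<- _]]. apply Cxnorm2_ge0.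
Qed.

Lemma Kc_Bnd ss : Kc ss = Bnd ss * exp (-1) ^ length ss.
Proof. induction ss; simpl. ring. rewrite IHss. fold (Bnd ss). ring. Qed.

Lemma exp_pow n : exp (-1) ^ n * exp (INR n) = 1.
Proof.
  induction n. simpl. rewrite exp_0. ring.
  rewrite S_INR, exp_plus. simpl.
  replace (exp (-1) * exp (-1) ^ n * (exp (INR n) * exp 1))
    with ((exp (-1) ^ n * exp (INR n)) * (exp (-1) * exp 1)) by ring.
  rewrite IHn, exp_m1_1. ring.
Qed.

Theorem theorem1p2 (N : nat) (zs : list Cx) :
  (1 <= N)%nat -> length zs = N ->
  prod_bw_factors zs <=
    sqrt (exp (INR N) / (INR N + 1)) * bw_norm (prod_lin zs).
Proof.
  intros _ HN.
  set (B := sum_f_R0 (fun k => Cxnorm2 (nth k (prod_lin zs) Cx0) / Binomial.C N k) N).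
  assert (HB : bw_norm (prod_lin zs) = sqrt B).
  { unfold bw_norm. rewrite prod_lin_len, HN. replace (S N - 1)%nat with N by lia. reflexivity. }
  set (ss := map Cxnorm2 zs).
  assert (Hss : forall s, In s ss -> 0 <= s).
  { intros s Hs. apply in_map_iff in Hs. destruct Hs as [y [<- _]]. apply Cxnorm2_ge0. }
  assert (K : Kc ss <= B / INR (S N)).
  { apply (key_gen ss (Wf (prod_lin zs) N)). auto. apply Wf_int.
    intros t Ht. rewrite <- HN. apply pointwise; auto. }
  rewrite Kc_Bnd in K. unfold ss in K. rewrite length_map, HN in K. fold ss in K.
  assert (HBn := Bnd_ge0 ss Hss).
  assert (HN1 : 0 < INR N + 1) by (assert (H := pos_INR N); lra).
  assert (HE : 0 < exp (INR N)) by apply exp_pos.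
  assert (HB0 : 0 <= B).
  { apply Rle_trans with (Bnd ss * exp (-1) ^ N * INR (S N)).
    apply Rmult_le_pos. apply Rmult_le_pos; auto. apply pow_le. left; apply exp_pos. apply pos_INR.
    rewrite S_INR in *. apply Rmult_le_reg_r with (/ (INR N + 1)). apply Rinv_0_lt_compat; lra.
    replace (Bnd ss * exp (-1) ^ N * (INR N + 1) * / (INR N + 1)) with (Bnd ss * exp (-1) ^ N) by (field; lra).
    exact K. }
  rewrite prod_bw, HB. fold ss.
  rewrite <- sqrt_mult. 2: { apply Rlt_le, Rdiv_lt_0_compat; lra. } 2: exact HB0.
  apply sqrt_le_1_alt.
  rewrite S_INR in K.
  assert (E := exp_pow N).
  apply Rmult_le_compat_r with (r := exp (INR N) * (INR N + 1)) in K.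
  2: { apply Rmult_le_pos; lra. }
  replace (Bnd ss * exp (-1) ^ N * (exp (INR N) * (INR N + 1))) with (Bnd ss * (INR N + 1)) in K
    by (replace (Bnd ss * exp (-1) ^ N * (exp (INR N) * (INR N + 1))) with (Bnd ss * (INR N + 1) * (exp (-1) ^ N * exp (INR N))) by ring; rewrite E; ring).
  apply Rmult_le_reg_r with (INR N + 1). lra.
  replace (exp (INR N) / (INR N + 1) * B * (INR N + 1)) with (B / (INR N + 1) * (exp (INR N) * (INR N + 1))) by (field; lra).
  exact K.
Qed.
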